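(* WL-powerful GNNs cannot, in general, distinguish a satisfiable residual formula from an unsatisfiable one even after $\Theta(n)$ variable assignments, where $n$ is the number of variables. Precisely: there is a constant $C>0$ such that for every integer $N\ge 4$ there exist 3-SAT formulas $f$ (satisfiable) and $\tilde f$ (unsatisfiable), each with at most $CN$ variables, such that for every partial assignment $\sigma$ of at most $\lfloor N/2\rfloor-1$ variables of $f$ there is a partial assignment $\tilde\sigma$ of variables of $\tilde f$ with $\mathrm{LCN}(\sigma(f))$ and $\mathrm{LCN}(\tilde\sigma(\tilde f))$ indistinguishable by the WL test; in particular, when $\sigma$ is the restriction of a satisfying assignment of $f$, the residual formula $\sigma(f)$ is satisfiable while $\tilde\sigma(\tilde f)$ is unsatisfiable, yet they are WL-indistinguishable.
   Context: A 3-SAT formula is a CNF formula (set of clauses, each a set of literals) with every clause of at most 3 literals. For a CNF formula $f$ on variables $x_1,\dots,x_n$, $\mathrm{LCN}(f)$ is the edge-colored graph with vertices the $2n$ literals $x_i,\neg x_i$ and one vertex per clause, a ''literal-clause'' edge $\{\ell,c\}$ whenever $\ell\in c$, and a differently colored ''literal-literal'' edge $\{x_i,\neg x_i\}$ for each $i$. For a partial assignment $\sigma$, $\sigma(f)$ denotes the residual formula and $\mathrm{LCN}(\sigma(f))$ is $\mathrm{LCN}(f)$ with literal vertices set true by $\sigma$ labeled $\top$, those set false labeled $\bot$, all others a default label. The WL test (color refinement) starts from the vertex labels and repeatedly replaces each vertex color by the pair (old color, for each edge color $c$ the multiset of old colors of neighbors via $c$-colored edges) until the partition stabilizes; run on the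 disjoint union of two graphs, they are indistinguishable iff every color occurs equally often in both. A WL-powerful GNN is one whose distinguishing power equals that of the WL test. *)

(* Defs.v *)
From mathcomp Require Import all_boot.
Set Implicit Arguments. Unset Strict Implicit. Unset Printing Implicit Defensive.

(* A literal over variables 'I_n: (i, true) is x_i, (i, false) is ~ x_i. *)
Definition lit (n : nat) : finType := ('I_n * bool)%type.
Definition clause (n : nat) : finType := {set lit n}.
Definition formula (n : nat) : finType := {set clause n}.

Definition is3SAT n (f : formula n) : Prop := forall c, c \in f -> #|c| <= 3.

Definition lit_val n (a : 'I_n -> bool) (l : lit n) : bool := a l.1 == l.2.
Definition satisfies n (a : 'I_n -> bool) (f : formula n) : Prop :=
  forall c, c \in f -> exists2 l, l \in c & lit_val a l.
Definition satisfiable n (f : formula n) : Prop := exists a, satisfies a f.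

Definition passign (n : nat) : finType := {ffun 'I_n -> option bool}.
Definition assigned n (s : passign n) : {set 'I_n} := [set i | s i != None].
(* the residual formula sigma(f) is satisfiable iff some total extension of sigma satisfies f *)
Definition residual_satisfiable n (s : passign n) (f : formula n) : Prop :=
  exists a : 'I_n -> bool, (forall i b, s i = Some b -> a i = b) /\ satisfies a f.

(* edge colours: true = literal-clause edge, false = literal-literal edge *)
Record lgraph := LGraph {
  lg_V : finType;
  lg_lab : lg_V -> nat;
  lg_adj : bool -> rel lg_V }.

(* LCN(sigma(f)): vertices are literals and clauses of f.
   Labels: literal set true by sigma -> 1, set false -> 2, unassigned -> 0;
   clause vertices -> 3 (vertex type label). *)
Definition lcn_vert n (f : formula n) : finType := (lit n + {c : clause n | c \in f})%type.

Definition lcn_lab n (f : formula n) (s : passign n) (v : lcn_vert f) : nat :=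
  match v with
  | inl l => match s l.1 with
             | None => 0
             | Some b => if b == l.2 then 1 else 2
             end
  | inr _ => 3
  end.

Definition lcn_adj n (f : formula n) (col : bool) (u v : lcn_vert f) : bool :=
  match u, v with
  | inl l, inr c => col && (l \in val c)
  | inr c, inl l => col && (l \in val c)
  | inl l1, inl l2 => ~~ col && (l1.1 == l2.1) && (l1.2 != l2.2)
  | inr _, inr _ => false
  end.

Definition LCN n (f : formula n) (s : passign n) : lgraph :=
  @LGraph (lcn_vert f) (@lcn_lab n f s) (@lcn_adj n f).

(* Round t+1 colour = (round t colour, for each edge colour c the multiset of
   round-t colours of c-neighbours); multisets agree iff for every colour class
   (represented by any vertex w) the numbers of neighbours in it agree. *)
Fixpoint wl_eq (V : finType) (lab : V -> nat) (adj : bool -> rel V) (t : nat)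
    : rel V :=
  match t with
  | 0 => fun u v => lab u == lab v
  | t'.+1 => fun u v =>
      wl_eq lab adj t' u v &&
      [forall c : bool, forall w : V,
         #|[pred x | adj c u x && wl_eq lab adj t' x w]| ==
         #|[pred x | adj c v x && wl_eq lab adj t' x w]|]
  end.

Definition du_V (G1 G2 : lgraph) : finType := (lg_V G1 + lg_V G2)%type.
Definition du_lab (G1 G2 : lgraph) (v : du_V G1 G2) : nat :=
  match v with inl x => lg_lab x | inr y => lg_lab y end.
Definition du_adj (G1 G2 : lgraph) (c : bool) (u v : du_V G1 G2) : bool :=
  match u, v with
  | inl x, inl y => lg_adj c x y
  | inr x, inr y => lg_adj c x y
  | _, _ => false
  end.

Definition in_left (G1 G2 : lgraph) (v : du_V G1 G2) : bool :=
  if v is inl _ then true else false.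

(* WL-indistinguishable: in the refinement of the disjoint union, every colour
   occurs equally often in both graphs (at every round, equivalently at the
   stable round). *)
Definition wl_indist (G1 G2 : lgraph) : Prop :=
  forall (t : nat) (w : du_V G1 G2),
    #|[pred x | in_left x && wl_eq (@du_lab G1 G2) (@du_adj G1 G2) t x w]| =
    #|[pred x | ~~ in_left x && wl_eq (@du_lab G1 G2) (@du_adj G1 G2) t x w]|.

(* Main.v *)
Require Import Defs.
From mathcomp Require Import all_boot zify.
Set Implicit Arguments. Unset Strict Implicit. Unset Printing Implicit Defensive.

Lemma card_ind (X : finType) (P : pred X) : #|[pred x | P x]| = \sum_x (P x : nat).
Proof.
rewrite -sum1_card big_mkcond /=; apply: eq_bigr => x _; rewrite inE; by case: (P x).
Qed.

Lemma card_sumT (A B : finType) (Q : pred (A + B)%type) :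
  #|[pred x | Q x]| = #|[pred a | Q (inl a)]| + #|[pred b | Q (inr b)]|.
Proof. by rewrite !card_ind big_sumType. Qed.

Lemma card_dec (X K : finType) (Phi : X -> K) (A P : pred X) :
  (forall x y, Phi x = Phi y -> P x = P y) ->
  #|[pred x | A x && P x]| =
  \sum_(k | [exists x, (Phi x == k) && P x]) #|[pred x | A x && (Phi x == k)]|.
Proof.
move=> HP; rewrite -sum1_card.
rewrite (partition_big Phi (fun k => [exists x, (Phi x == k) && P x])); last first.
  move=> i; rewrite inE => /andP[_ Pi]; apply/existsP; exists i; by rewrite eqxx Pi.
apply: eq_bigr => k /existsP[x0 /andP[/eqP Hx0 Px0]].
rewrite -sum1_card; apply: eq_bigl => x; rewrite !inE.
case E: (Phi x == k); rewrite ?andbF ?andbT //.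
by rewrite (HP x x0) ?Px0 ?andbT // (eqP E).
Qed.

Arguments card_dec {X K} Phi A P _.

Definition equit (G : lgraph) (K : finType) (phi : lg_V G -> K) (labK : K -> nat)
  (cnt : bool -> K -> K -> nat) : Prop :=
  (forall x, lg_lab x = labK (phi x)) /\
  (forall c u k, #|[pred x | lg_adj c u x && (phi x == k)]| = cnt c (phi u) k).

Lemma core (G1 G2 : lgraph) (K : finType) (phi1 : lg_V G1 -> K) (phi2 : lg_V G2 -> K)
  labK cnt :
  equit phi1 labK cnt -> equit phi2 labK cnt ->
  (forall k, #|[pred x | phi1 x == k]| = #|[pred x | phi2 x == k]|) ->
  wl_indist G1 G2.
Proof.
move=> [lab1 cnt1] [lab2 cnt2] hfib.
pose Phi (x : du_V G1 G2) : K := match x with inl a => phi1 a | inr b => phi2 b end.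
have labP : forall x, du_lab x = labK (Phi x) by case.
have cntP : forall c u k, #|[pred x | du_adj c u x && (Phi x == k)]| = cnt c (Phi u) k.
  move=> c [a|b] k; rewrite card_sumT /=.
    by rewrite -cnt1 [X in _ + X]eq_card0 ?addn0.
  by rewrite -cnt2 [X in X + _]eq_card0 ?add0n.
have inv : forall t u v, Phi u = Phi v -> forall w,
    wl_eq (@du_lab G1 G2) (@du_adj G1 G2) t u w = wl_eq (@du_lab G1 G2) (@du_adj G1 G2) t v w.
  elim => [|t IH] u v Huv w /=; first by rewrite !labP Huv.
  rewrite (IH u v Huv w); congr (_ && _); apply: eq_forallb => c; apply: eq_forallb => w'.
  have Pinv : forall x y, Phi x = Phi y ->
     wl_eq (@du_lab G1 G2) (@du_adj G1 G2) t x w' = wl_eq (@du_lab G1 G2) (@du_adj G1 G2) t y w'.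
    by move=> x y Hxy; apply: IH.
  rewrite (card_dec Phi (du_adj c u) _ Pinv) (card_dec Phi (du_adj c v) _ Pinv).
  congr (_ == _); apply: eq_bigr => k _; by rewrite !cntP Huv.
move=> t w.
have Pinv : forall x y, Phi x = Phi y ->
   wl_eq (@du_lab G1 G2) (@du_adj G1 G2) t x w = wl_eq (@du_lab G1 G2) (@du_adj G1 G2) t y w.
  by move=> x y Hxy; apply: inv.
rewrite (card_dec Phi (@in_left G1 G2) _ Pinv) (card_dec Phi (fun x => ~~ @in_left G1 G2 x) _ Pinv).
apply: eq_bigr => k _; rewrite !card_sumT /=.
by rewrite [X in _ + X]eq_card0 // [X in _ = X + _]eq_card0 // addn0 add0n hfib.
Qed.

Lemma card_uniq1 (T : finType) (P : pred T) a0 :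
  (forall a, P a -> a = a0) -> #|[pred a | P a]| = P a0.
Proof.
move=> H; case Pa0: (P a0).
  apply: eq_card1 => a; rewrite inE; apply/idP/eqP; first exact: H.
  by move->.
apply: eq_card0 => a; rewrite inE; apply/negbTE/negP => Pa.
by move: (Pa); rewrite (H a Pa) Pa0.
Qed.

Lemma card_sigP (T : finType) (A : {pred T}) (Q : pred T) :
  #|[pred x : {x | x \in A} | Q (val x)]| = #|[pred x | (x \in A) && Q x]|.
Proof.
rewrite !card_ind.
have -> : \sum_x (((x \in A) && Q x) : nat) = \sum_(x in A) (Q x : nat).
  rewrite [RHS]big_mkcond /=; apply: eq_bigr => x _; by case: (x \in A).
by rewrite [RHS]big_sub.
Qed.

Lemma card_reindex (T : finType) (F : T -> T) (P : pred T) :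
  injective F -> #|[pred x | P (F x)]| = #|[pred x | P x]|.
Proof.
move=> inj; rewrite !card_ind.
by rewrite [RHS](reindex_inj inj).
Qed.

Lemma inl_eqE (A B : eqType) (x y : A) : (@inl A B x == inl y) = (x == y).
Proof. by apply/eqP/eqP => [[]|->]. Qed.
Lemma inr_eqE (A B : eqType) (x y : B) : (@inr A B x == inr y) = (x == y).
Proof. by apply/eqP/eqP => [[]|->]. Qed.

Definition rl n m (r : 'I_n -> 'I_m) (l : lit n) : lit m := (r l.1, l.2).
Definition rc n m (r : 'I_n -> 'I_m) (c : clause n) : clause m := [set rl r l | l in c].

Definition phiL n m (r : 'I_n -> 'I_m) (f : formula n) (x : lcn_vert f)
  : (lit m + clause m)%type :=
  match x with inl l => inl (rl r l) | inr c => inr (rc r (val c)) end.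

Definition labK m (sh : passign m) (k : (lit m + clause m)%type) : nat :=
  match k with
  | inl l => match sh l.1 with None => 0 | Some b => if b == l.2 then 1 else 2 end
  | inr _ => 3
  end.

Definition cntH m (h : formula m) (c : bool) (k0 k : (lit m + clause m)%type) : nat :=
  match c, k0, k with
  | true, inl l, inr d => (d \in h) && (l \in d)
  | false, inl l, inl l' => (l'.1 == l.1) && (l'.2 != l.2)
  | true, inr d, inl l => l \in d
  | _, _, _ => false
  end.

Definition CV2 n m (r : 'I_n -> 'I_m) (f : formula n) (h : formula m) :=
  forall l d, #|[pred c | (c \in f) && ((l \in c) && (rc r c == d))]| = (d \in h) && (rl r l \in d).
Definition CV3 n m (r : 'I_n -> 'I_m) (f : formula n) :=
  forall c, c \in f -> {in c &, injective (rl r)}.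

Lemma cover_equit n m (r : 'I_n -> 'I_m) (f : formula n) (h : formula m)
  (s : passign n) (sh : passign m) :
  (forall v, s v = sh (r v)) -> CV2 r f h -> CV3 r f ->
  equit (G := LCN f s) (@phiL n m r f) (labK sh) (cntH h).
Proof.
move=> HS cv2 cv3; split.
  by case=> [l|c] //=; rewrite /labK /= HS.
move=> c [l|c0] k; rewrite card_sumT /=.
  case: c => /=.
    rewrite [X in X + _]eq_card0 // add0n.
    case: k => [k|d] /=; first by rewrite eq_card0 // => b; rewrite !inE /= andbF.
    rewrite -cv2 -card_sigP; apply: eq_card => b; by rewrite !inE.
  rewrite [X in _ + X]eq_card0 ?addn0 //.
  case: k => [k|d] /=; last by rewrite eq_card0 // => a; rewrite inE andbF.
  rewrite (@card_uniq1 _ _ (l.1, ~~ l.2)); last first.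
    case=> a1 a2 /=; case/andP=> [/andP[/eqP <- H2] _].
    by congr pair; move: H2; case: (l.2); case: a2.
  case: k => k1 k2; case: l => l1 l2 /=; rewrite eqxx inl_eqE /rl /= xpair_eqE.
  by case: k2; case: l2; rewrite ?andbT ?andbF //= eq_sym.
rewrite [X in _ + X]eq_card0 ?addn0 //.
case: c => /=; last by rewrite eq_card0.
case: k => [k|d] /=; last by rewrite eq_card0 // => a; rewrite inE andbF.
case: (boolP (k \in rc r (val c0))) => Hk.
  case/imsetP: (Hk) => a0 Ha0 ->.
  rewrite (@card_uniq1 _ _ a0) /= ?Ha0 ?eqxx //.
  move=> a /andP[Ha]; rewrite inl_eqE => /eqP; exact: (cv3 _ (valP c0) a a0 Ha Ha0).
apply: eq_card0 => a; rewrite inE; apply/negbTE/negP => /andP[Ha].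
rewrite inl_eqE => /eqP Hk'.
by move: Hk; rewrite -Hk' => /negP; apply; apply: imset_f.
Qed.

Lemma CV2_of n m (r : 'I_n -> 'I_m) (f : formula n) (h : formula m) :
  (forall c, c \in f -> rc r c \in h) ->
  (forall l c1 c2, c1 \in f -> c2 \in f -> l \in c1 -> l \in c2 -> rc r c1 = rc r c2 -> c1 = c2) ->
  (forall l d, d \in h -> rl r l \in d -> exists c, [/\ c \in f, l \in c & rc r c = d]) ->
  CV2 r f h.
Proof.
move=> Hc Ha Hb l d.
case: (boolP ((d \in h) && (rl r l \in d))) => [/andP[dh ld]|H].
  have [c0 [c0f lc0 rc0]] := Hb l d dh ld.
  rewrite (@card_uniq1 _ _ c0) ?c0f ?lc0 ?rc0 ?eqxx //.
  move=> c /andP[cf /andP[lc /eqP rcd]]; apply: (Ha l) => //; by rewrite rcd rc0.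
apply: eq_card0 => c; rewrite inE; apply/negbTE/negP => /andP[cf /andP[lc /eqP rcd]].
move/negP: H; apply; rewrite -rcd Hc //=; exact: imset_f.
Qed.

Lemma fib_dc n m (r : 'I_n -> 'I_m) (f : formula n) (h : formula m) :
  CV2 r f h -> CV3 r f -> (forall c, c \in f -> c != set0) ->
  forall d, #|[pred c | (c \in f) && (rc r c == d)]| * #|d| =
            (d \in h) * #|[pred l | rl r l \in d]|.
Proof.
move=> cv2 cv3 ne d.
rewrite -sum_nat_const.
transitivity (\sum_(c in [pred c | (c \in f) && (rc r c == d)]) \sum_l ((l \in c) : nat)).
  apply: eq_bigr => c; rewrite inE => /andP[cf /eqP rcd].
  rewrite -card_ind -rcd card_in_imset; last exact: cv3.
  by apply: eq_card => x; rewrite inE.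
rewrite exchange_big /=.
transitivity (\sum_l (((d \in h) && (rl r l \in d)) : nat)).
  apply: eq_bigr => l _; rewrite -cv2 card_ind big_mkcond /=.
  apply: eq_bigr => c _; rewrite inE; by case: (c \in f); case: (rc r c == d); case: (l \in c).
rewrite card_ind big_distrr /=; apply: eq_bigr => l _; by case: (d \in h); case: (rl r l \in d).
Qed.

Lemma fib_eq n m (r : 'I_n -> 'I_m) (f g : formula n) (h : formula m) :
  CV2 r f h -> CV3 r f -> (forall c, c \in f -> c != set0) ->
  CV2 r g h -> CV3 r g -> (forall c, c \in g -> c != set0) ->
  forall k, #|[pred x | @phiL n m r f x == k]| = #|[pred x | @phiL n m r g x == k]|.
Proof.
move=> f2 f3 fne g2 g3 gne k; rewrite !card_sumT /=.
case: k => [k|d].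
  rewrite [X in _ + X]eq_card0 // [X in _ = _ + X]eq_card0 //.
rewrite [X in X + _]eq_card0 // [X in _ = X + _]eq_card0 // !add0n.
have E : forall (F : formula n), #|[pred b : {c | c \in F} | inr (rc r (val b)) == inr d :> (lit m + clause m)]| =
           #|[pred c | (c \in F) && (rc r c == d)]|.
  move=> F; rewrite -card_sigP; apply: eq_card => b; by rewrite !inE inr_eqE.
rewrite !E.
case: (eqVneq d set0) => [->|dne].
  rewrite eq_card0; last first.
    move=> c; rewrite inE; apply/negbTE/negP => /andP[cf]; rewrite imset_eq0.
    by move/negP: (fne c cf).
  rewrite eq_card0 // => c; rewrite inE; apply/negbTE/negP => /andP[cf]; rewrite imset_eq0.
  by move/negP: (gne c cf).
have dpos : 0 < #|d| by rewrite card_gt0.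
apply/eqP; rewrite -(eqn_pmul2r dpos) (fib_dc f2 f3 fne) (fib_dc g2 g3 gne) //.
Qed.

Lemma equit_perm n (f : formula n) (s s' : passign n) (T : lcn_vert f -> lcn_vert f)
  (K : finType) (phi : lcn_vert f -> K) labK cnt :
  injective T -> (forall c u x, lcn_adj c (T u) (T x) = lcn_adj c u x) ->
  (forall x, lcn_lab s' x = lcn_lab s (T x)) ->
  equit (G := LCN f s) phi labK cnt -> equit (G := LCN f s') (phi \o T) labK cnt.
Proof.
move=> injT adjT labT [H1 H2]; split.
  by move=> x /=; rewrite labT; exact: H1.
move=> c u k /=; rewrite -H2.
rewrite -(card_reindex (fun x => lcn_adj c (T u) x && (phi x == k)) injT).
apply: eq_card => x; by rewrite !inE adjT.
Qed.

Definition fP n (P : lit n -> lit n -> bool) : formula n :=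
  [set c : clause n | [exists l1, exists l2, (c == [set l1; l2]) && P l1 l2]].

Lemma fPP n (P : lit n -> lit n -> bool) c :
  reflect (exists l1 l2, c = [set l1; l2] /\ P l1 l2) (c \in fP P).
Proof.
rewrite inE; apply: (iffP existsP) => [[l1 /existsP[l2 /andP[/eqP -> H]]]|[l1 [l2 [-> H]]]].
  by exists l1, l2.
by exists l1; apply/existsP; exists l2; rewrite eqxx H.
Qed.

Lemma rl_set2 n m (r : 'I_n -> 'I_m) l1 l2 : rc r [set l1; l2] = [set rl r l1; rl r l2].
Proof. by rewrite /rc imsetU !imset_set1. Qed.

Definition lv n (l : lit n) : nat := nat_of_ord l.1.
Definition lp n (l : lit n) : bool := l.2.

Lemma lv_lt n (l : lit n) : lv l < n.
Proof. exact: ltn_ord. Qed.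

Lemma lit_eq n (l l' : lit n) : lv l = lv l' -> lp l = lp l' -> l = l'.
Proof. by case: l l' => [v p] [v' p'] /= H ->; congr pair; apply: val_inj. Qed.

Definition patE n (E : bool -> bool -> bool -> bool) (l1 l2 : lit n) : bool :=
  [&& lv l1 %/ 4 == lv l2 %/ 4, lv l1 %% 4 < 2, 2 <= lv l2 %% 4 &
      odd (lv l2) == odd (lv l1) (+) E (lv l1 < 4) (lp l1) (lp l2)].

Definition patH n (l1 l2 : lit n) : bool :=
  [&& lv l1 %/ 4 == lv l2 %/ 4, lv l1 %% 4 < 2, 2 <= lv l2 %% 4,
      (lv l1 < 4) ==> ((lv l1 == 0) && (lv l2 == 2)) &
      (4 <= lv l1) ==> (odd (lv l2) == odd (lv l1) (+) (lp l1 != lp l2))].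

Definition EA (b p q : bool) := p != q.
Definition EB (b p q : bool) := ~~ b && (p != q).

Definition rho n (v : 'I_n) : 'I_n :=
  Ordinal (leq_ltn_trans (leq_subr (odd v && (v < 4)) v) (ltn_ord v)).

Lemma lv_rho n (l : lit n) : lv (rl (@rho n) l) = lv l - (odd (lv l) && (lv l < 4)).
Proof. by []. Qed.
Lemma lp_rl n m (r : 'I_n -> 'I_m) (l : lit n) : lp (rl r l) = lp l.
Proof. by []. Qed.

Definition pv K (E : bool -> bool -> bool -> bool) (l : lit (4 * K)) (q : bool) : nat :=
  if lv l %% 4 < 2 then 4 * (lv l %/ 4) + 2 + (odd (lv l) (+) E (lv l < 4) (lp l) q)
  else 4 * (lv l %/ 4) + (odd (lv l) (+) E (lv l < 4) q (lp l)).

Lemma pv_lt K E (l : lit (4 * K)) q : pv E l q < 4 * K.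
Proof. rewrite /pv; have := lv_lt l; case: ifP => _; lia. Qed.

Definition partner K E (l : lit (4 * K)) q : lit (4 * K) := (Ordinal (pv_lt E l q), q).

Lemma lv_partner K E (l : lit (4 * K)) q : lv (partner E l q) = pv E l q.
Proof. by []. Qed.
Lemma lp_partner K E (l : lit (4 * K)) q : lp (partner E l q) = q.
Proof. by []. Qed.

Lemma partner_mem K E (l : lit (4 * K)) q : [set l; partner E l q] \in fP (patE E).
Proof.
apply/fPP; case: (ltnP (lv l %% 4) 2) => H.
  exists l, (partner E l q); split => //.
  rewrite /patE lv_partner lp_partner /pv H; set e := E _ _ _; lia.
exists (partner E l q), l; split; first by rewrite setUC.
rewrite /patE lv_partner lp_partner /pv ltnNge H /=.
set e := E (lv l < 4) q (lp l).
rewrite (_ : (4 * (lv l %/ 4) + (odd (lv l) (+) e) < 4) = (lv l < 4)); last by apply/idP/idP; lia.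
rewrite -/e; lia.
Qed.

Lemma partner_eq K E (l : lit (4 * K)) c :
  c \in fP (patE E) -> l \in c -> exists q, c = [set l; partner E l q].
Proof.
case/fPP => l1 [l2 [-> Hp]]; rewrite !inE => /orP[/eqP->|/eqP->].
  exists (lp l2); congr [set _; _]; apply: lit_eq; rewrite ?lv_partner ?lp_partner //.
  move: Hp; rewrite /patE /pv => Hp.
  have -> : lv l1 %% 4 < 2 by lia.
  set e := E _ _ _ in Hp *; lia.
exists (lp l1); rewrite setUC; congr [set _; _]; apply: lit_eq; rewrite ?lv_partner ?lp_partner //.
move: Hp; rewrite /patE /pv => Hp.
have -> : (lv l2 %% 4 < 2) = false by lia.
have Hb : (lv l1 < 4) = (lv l2 < 4) by apply/idP/idP; lia.
move: Hp; rewrite Hb; set e := E _ _ _; lia.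
Qed.

Lemma rl_eq n m (r : 'I_n -> 'I_m) (l l' : lit n) :
  rl r l = rl r l' -> lv (rl r l) = lv (rl r l') /\ lp l = lp l'.
Proof. by move=> H; split; [rewrite H | exact: (congr1 snd H)]. Qed.

Lemma inj_a K E (l : lit (4 * K)) c1 c2 :
  c1 \in fP (patE E) -> c2 \in fP (patE E) -> l \in c1 -> l \in c2 ->
  rc (@rho _) c1 = rc (@rho _) c2 -> c1 = c2.
Proof.
move=> h1 h2 i1 i2.
have [q1 ->] := partner_eq h1 i1; have [q2 ->] := partner_eq h2 i2.
rewrite !rl_set2 => Hrc.
have : rl (@rho _) (partner E l q1) \in [set rl (@rho _) l; rl (@rho _) (partner E l q2)].
  by rewrite -Hrc !inE eqxx orbT.
rewrite !inE => /orP[/eqP H|/eqP H].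
  move/rl_eq: H => [H _]; move: H; rewrite !lv_rho lv_partner /pv.
  by case: ifP => Hc; set e := E _ _ _ => Hx; exfalso; lia.
by move/rl_eq: H => [_ ]; rewrite !lp_partner => ->.
Qed.

Lemma L1 v : v < 4 -> v %% 4 < 2 -> v - (odd v && (v < 4)) = 0. Proof. lia. Qed.
Lemma L2 v : v < 4 -> 2 <= v %% 4 -> v - (odd v && (v < 4)) = 2. Proof. lia. Qed.
Lemma L3 v : 4 <= v -> v - (odd v && (v < 4)) = v. Proof. lia. Qed.
Lemma L4 u v : u %/ 4 = v %/ 4 -> (u < 4) = (v < 4). Proof. move=> H; apply/idP/idP; lia. Qed.
Lemma L5 v : ((v - (odd v && (v < 4))) %% 4 < 2) = (v %% 4 < 2). Proof. apply/idP/idP; lia. Qed.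
Lemma L5b v : ((v - (odd v && (v < 4))) < 4) = (v < 4). Proof. apply/idP/idP; lia. Qed.
Lemma L5c v : (v - (odd v && (v < 4))) %/ 4 = v %/ 4. Proof. lia. Qed.
Lemma L6 v (c : bool) : v < 4 ->
  (4 * (v %/ 4) + 2 + c) - (odd (4 * (v %/ 4) + 2 + c) && (4 * (v %/ 4) + 2 + c < 4)) = 2.
Proof. lia. Qed.
Lemma L6b v (c : bool) : v < 4 ->
  (4 * (v %/ 4) + c) - (odd (4 * (v %/ 4) + c) && (4 * (v %/ 4) + c < 4)) = 0.
Proof. lia. Qed.
Lemma L7 v w (c : bool) : w %/ 4 = v %/ 4 -> 2 <= w %% 4 -> odd w = c -> w = 4 * (v %/ 4) + 2 + c.
Proof. lia. Qed.
Lemma L7b v w (c : bool) : w %/ 4 = v %/ 4 -> w %% 4 < 2 -> odd w = c -> w = 4 * (v %/ 4) + c.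
Proof. lia. Qed.
Lemma L8 v (c : bool) : 4 <= v -> 4 <= 4 * (v %/ 4) + c. Proof. lia. Qed.
Lemma L8b v (c : bool) : 4 <= v -> 4 <= 4 * (v %/ 4) + 2 + c. Proof. lia. Qed.

Lemma lift_b K E (l : lit (4 * K)) d :
  (forall p q, E false p q = (p != q)) ->
  d \in fP (@patH _) -> rl (@rho _) l \in d ->
  exists c, [/\ c \in fP (patE E), l \in c & rc (@rho _) c = d].
Proof.
move=> HE /fPP[k1 [k2 [-> Hk]]]; rewrite !inE => /orP[/eqP H|/eqP H].
  exists [set l; partner E l (lp k2)]; split; [exact: partner_mem | by rewrite !inE eqxx | ].
  rewrite rl_set2 H; congr [set _; _]; apply: lit_eq; rewrite ?lp_rl ?lp_partner //.
  move: Hk; rewrite /patH -H !lv_rho lp_rl lv_partner /pv => /and5P[/eqP Hb H1 H2 I1 I2].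
  rewrite L5 in H1; rewrite H1.
  case: (ltnP (lv l) 4) => H4.
    rewrite (L6 _ H4).
    move: I1; rewrite L5b H4 /= => /andP[_ /eqP ->] //.
  have F : (lv l < 4) = false by rewrite ltnNge H4.
  rewrite HE (L3 (L8b _ H4)).
  move: I2 Hb; rewrite (L3 H4) H4 /= => /eqP I2 Hb.
  symmetry; apply: L7 => //; by rewrite Hb.
exists [set l; partner E l (lp k1)]; split; [exact: partner_mem | by rewrite !inE eqxx | ].
rewrite rl_set2 H setUC; congr [set _; _]; apply: lit_eq; rewrite ?lp_rl ?lp_partner //.
move: Hk; rewrite /patH -H !lv_rho lp_rl lv_partner /pv => /and5P[/eqP Hb H1 H2 I1 I2].
have Hy : (lv l %% 4 < 2) = false by rewrite -L5 ltnNge H2.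
rewrite Hy; rewrite L5c in Hb.
case: (ltnP (lv l) 4) => H4.
  rewrite (L6b _ H4).
  have Hk1 : lv k1 < 4 by rewrite (L4 Hb).
  by move: I1; rewrite Hk1 /= => /andP[/eqP -> _].
have F : (lv l < 4) = false by rewrite ltnNge H4.
rewrite HE (L3 (L8 _ H4)).
have Hk1 : 4 <= lv k1 by rewrite leqNgt (L4 Hb) F.
move: I2; rewrite Hk1 (L3 H4) /= => /eqP I2.
symmetry; apply: L7b => //.
by rewrite I2 -addbA addbb addbF.
Qed.

Lemma img_c K E (c : clause (4 * K)) :
  (forall p q, E false p q = (p != q)) ->
  c \in fP (patE E) -> rc (@rho _) c \in fP (@patH _).
Proof.
move=> HE /fPP[l1 [l2 [-> Hp]]]; rewrite rl_set2; apply/fPP.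
exists (rl (@rho _) l1), (rl (@rho _) l2); split => //.
move: Hp; rewrite /patE /patH !lv_rho !lp_rl => /and4P[/eqP Hb H1 H2 /eqP Ho].
have [H4|H4] : (lv l1 < 4) \/ (4 <= lv l1) by case: ltnP; [left|right].
  have H4' : lv l2 < 4 by rewrite -(L4 Hb).
  by rewrite (L1 H4 H1) (L2 H4' H2).
have H4' : 4 <= lv l2 by rewrite leqNgt -(L4 Hb) -leqNgt.
rewrite (L3 H4) (L3 H4'); have F : (lv l1 < 4) = false by rewrite ltnNge H4.
move: Ho; rewrite F HE => Ho.
by rewrite Hb eqxx H1 H2 /= H4 Ho eqxx.
Qed.

Lemma cv3_E K E : CV3 (@rho (4 * K)) (fP (patE E)).
Proof.
move=> c /fPP[l1 [l2 [-> Hp]]] x y; rewrite !inE.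
move: Hp; rewrite /patE; set e := E _ _ _ => Hp.
case/orP=> /eqP-> /orP[]/eqP-> // /rl_eq[]; rewrite !lv_rho; lia.
Qed.

Lemma fP_ne n (P : lit n -> lit n -> bool) c : c \in fP P -> c != set0.
Proof. by case/fPP => l1 [l2 [-> _]]; apply/set0Pn; exists l1; rewrite !inE eqxx. Qed.

Lemma fP_3 n (P : lit n -> lit n -> bool) : is3SAT (fP P).
Proof.
move=> c /fPP[l1 [l2 [-> _]]]; rewrite cards2; by case: (l1 != l2).
Qed.

Lemma CV2_E K E : (forall p q, E false p q = (p != q)) ->
  CV2 (@rho (4 * K)) (fP (patE E)) (fP (@patH _)).
Proof.
move=> HE; apply: CV2_of.
- move=> c; exact: img_c.
- move=> l c1 c2; exact: inj_a.
- move=> l d; exact: lift_b.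
Qed.

Definition tv K (j : 'I_K) (v : nat) : nat :=
  if v %/ 4 == 0 then 4 * j + v %% 4 else if v %/ 4 == j then v %% 4 else v.

Lemma tv_lt K (j : 'I_K) v : v < 4 * K -> tv j v < 4 * K.
Proof. rewrite /tv; have := ltn_ord j; case: ifP => _; [lia|case: ifP => _; lia]. Qed.

Definition tau K (j : 'I_K) (v : 'I_(4 * K)) : 'I_(4 * K) := Ordinal (tv_lt j (ltn_ord v)).

Lemma tvK K (j : 'I_K) v : tv j (tv j v) = v.
Proof.
rewrite {2}/tv; case: ifP => H0; [|case: ifP => Hj]; rewrite /tv;
  (case: ifP => H0'; [|case: ifP => Hj']); lia.
Qed.

Lemma tv_mod K (j : 'I_K) v : tv j v %% 4 = v %% 4.
Proof. rewrite /tv; case: ifP => H0; [|case: ifP => Hj]; lia. Qed.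
Lemma tv_odd K (j : 'I_K) v : odd (tv j v) = odd v.
Proof. rewrite /tv; case: ifP => H0; [|case: ifP => Hj]; lia. Qed.
Lemma tv_blk K (j : 'I_K) u v : u %/ 4 = v %/ 4 -> tv j u %/ 4 = tv j v %/ 4.
Proof.
move=> H; rewrite /tv; case: ifP => H0; [|case: ifP => Hj]; (case: ifP => H0'; [|case: ifP => Hj']); lia.
Qed.

Lemma tau_inj K (j : 'I_K) : injective (tau j).
Proof.
move=> x y H; have := congr1 (fun z => tv j (nat_of_ord z)) H => /=.
by rewrite !tvK => E; apply: val_inj.
Qed.

Lemma rl_inj n (r : 'I_n -> 'I_n) : injective r -> injective (rl r).
Proof. by move=> ri [a p] [b q] [/ri -> ->]. Qed.

Lemma lv_tau K (j : 'I_K) (l : lit (4 * K)) : lv (rl (tau j) l) = tv j (lv l).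
Proof. by []. Qed.

Definition fA K : formula (4 * K) := fP (patE EA).
Definition gB K : formula (4 * K) := fP (patE EB).
Definition hH K : formula (4 * K) := fP (@patH _).

Lemma tau_mem K (j : 'I_K) c : c \in fA K -> rc (tau j) c \in fA K.
Proof.
case/fPP => l1 [l2 [-> Hp]]; rewrite rl_set2; apply/fPP.
exists (rl (tau j) l1), (rl (tau j) l2); split => //.
move: Hp; rewrite /patE /EA !lv_tau !lp_rl !tv_mod !tv_odd.
case/and4P => /eqP Hb -> -> ->; by rewrite (tv_blk j Hb) eqxx.
Qed.

Definition Tm K (j : 'I_K) (x : lcn_vert (fA K)) : lcn_vert (fA K) :=
  match x with
  | inl l => inl (rl (tau j) l)
  | inr c => inr (exist (fun c => c \in fA K) (rc (tau j) (val c)) (tau_mem j (valP c)))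
  end.

Lemma Tm_inj K (j : 'I_K) : injective (Tm j).
Proof.
have ri := rl_inj (@tau_inj _ j).
case=> [l|c] [l'|c'] //= /eqP; rewrite ?inl_eqE ?inr_eqE => /eqP.
  by move/ri ->.
move/(congr1 val) => /= /(imset_inj ri) E; congr inr; exact: val_inj.
Qed.

Lemma Tm_adj K (j : 'I_K) c u x : lcn_adj c (Tm j u) (Tm j x) = lcn_adj c u x.
Proof.
have ri := rl_inj (@tau_inj _ j).
case: u => [l|c0]; case: x => [l'|c1] //=; rewrite ?mem_imset //.
by rewrite (inj_eq (@tau_inj _ j)).
Qed.

Lemma Tm_lab K (j : 'I_K) (s : passign (4 * K)) x :
  lcn_lab s x = lcn_lab [ffun v => s (tau j v)] (Tm j x).
Proof.
case: x => [l|c] //=; rewrite ffunE.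
have -> : tau j (tau j l.1) = l.1 by apply: val_inj; exact: tvK.
by [].
Qed.

Lemma free_block K (s : passign (4 * K)) : #|assigned s| < K ->
  exists j : 'I_K, forall v : 'I_(4 * K), v %/ 4 = j -> s v = None.
Proof.
move=> Hc.
have blt : forall v : 'I_(4 * K), v %/ 4 < K by move=> v; have := ltn_ord v; lia.
pose blk (v : 'I_(4 * K)) : 'I_K := Ordinal (blt v).
pose B := [set blk v | v in assigned s].
have [j Hj] : exists j, j \notin B.
  case: (pickP [pred j | j \notin B]) => [j Hj|H]; first by exists j.
  have BT : B = setT by apply/setP => x; move: (H x); rewrite !inE; case: (x \in B).
  have : #|B| <= #|assigned s| by exact: leq_imset_card.
  rewrite BT cardsT card_ord; lia.
exists j => v Hv; apply/eqP; apply: contraR Hj => Hs.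
apply/imsetP; exists v; first by rewrite inE.
by apply: val_inj.
Qed.

Lemma satA K : satisfiable (fA K).
Proof.
exists (fun v : 'I_(4 * K) => if v %% 4 < 2 then ~~ odd v else odd v).
move=> c /fPP[l1 [l2 [-> Hp]]].
move: Hp; rewrite /patE /EA => /and4P[_ H1 H2 /eqP Ho].
case: (boolP (lit_val (fun v : 'I_(4 * K) => if v %% 4 < 2 then ~~ odd v else odd v) l1)) => H.
  by exists l1; rewrite // !inE eqxx.
exists l2; first by rewrite !inE eqxx orbT.
move: H; rewrite /lit_val.
have -> : (l1.1 %% 4 < 2) = true by exact: H1.
have -> : (l2.1 %% 4 < 2) = false by move: H2; rewrite /lv; lia.
change (odd l2.1) with (odd (lv l2)); rewrite Ho.
change (l1.2) with (lp l1); change (l2.2) with (lp l2); change (odd l1.1) with (odd (lv l1)).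
by case: (odd (lv l1)); case: (lp l1); case: (lp l2).
Qed.

Lemma unsatB K : 0 < K -> ~ satisfiable (gB K).
Proof.
move=> K0 [a Ha].
have h0 : 0 < 4 * K by lia.
have h2 : 2 < 4 * K by lia.
pose o0 : 'I_(4 * K) := Ordinal h0.
pose o2 : 'I_(4 * K) := Ordinal h2.
have : [set (o0, ~~ a o0); (o2, ~~ a o2)] \in gB K.
  apply/fPP; exists (o0, ~~ a o0), (o2, ~~ a o2); split => //.
move/Ha => [l]; rewrite !inE => /orP[]/eqP-> /=; rewrite /lit_val /=; by case: (a _).
Qed.

Lemma rho_id n (v : 'I_n) : 4 <= v -> rho v = v.
Proof. move=> H; apply: val_inj => /=; lia. Qed.

Theorem corollary1 :
  exists C : nat, 0 < C /\
  forall N : nat, 4 <= N ->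
  exists (n1 n2 : nat) (f : formula n1) (g : formula n2),
    is3SAT f /\ is3SAT g /\ n1 <= C * N /\ n2 <= C * N /\
    satisfiable f /\ ~ satisfiable g /\
        (forall s : passign n1, #|assigned s| <= N./2 - 1 ->
          exists s' : passign n2, wl_indist (LCN f s) (LCN g s')).
Proof.
exists 4; split => // N HN.
exists (4 * N), (4 * N), (fA N), (gB N).
split; first exact: fP_3.
split; first exact: fP_3.
split => //; split => //.
split; first exact: satA.
split; first by apply: unsatB; lia.
move=> s Hs.
have Hs' : #|assigned s| < N by lia.
have [j Hj] := free_block Hs'.
pose s0 : passign (4 * N) := [ffun v => s (tau j v)].
exists s0.
have HS : forall v, s0 v = s0 (rho v).
  move=> v; case: (ltnP v 4) => H4; last by rewrite rho_id.
  rewrite !ffunE !Hj //= /tv.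
    have -> : (v - (odd v && (v < 4))) %/ 4 == 0 by lia.
    have := ltn_ord j; lia.
  have -> : v %/ 4 == 0 by lia.
  have := ltn_ord j; lia.
have EA0 : forall p q, EA false p q = (p != q) by [].
have EB0 : forall p q, EB false p q = (p != q) by [].
have eqf := cover_equit HS (CV2_E EA0) (@cv3_E N EA).
have eqg := cover_equit HS (CV2_E EB0) (@cv3_E N EB).
apply: (@core (LCN (fA N) s) (LCN (gB N) s0) _ (@phiL _ _ (@rho _) (fA N) \o Tm j) (@phiL _ _ (@rho _) (gB N)) (labK s0) (cntH (hH N))).
- apply: (equit_perm (s := s0)) => //.
  + exact: Tm_inj.
  + exact: Tm_adj.
  + exact: Tm_lab.
- exact: eqg.
- move=> k.
  rewrite (card_reindex (fun x => @phiL _ _ (@rho _) (fA N) x == k) (@Tm_inj _ j)).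
  apply: fib_eq.
  + exact: CV2_E.
  + exact: cv3_E.
  + exact: fP_ne.
  + exact: CV2_E.
  + exact: cv3_E.
  + exact: fP_ne.
Qed.
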